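(* Let $d \ge 1$ be an integer, let $X_0, X_1, \dots$ be independent random variables each taking values $0$ and $1$ with probability $1/2$ each, and let $$P_d = P\Big(\exists N > 0 : \sum_{k=0}^{N-1} X_k < \tfrac{1}{d} N\Big).$$ Then $P_1 = P_2 = 1$, and for $d > 2$ the polynomial $g_d(z) = z^d - 2z + 1$ has exactly one root in the open unit disk, this root is real and lies in $(1/2,1)$, and $P_d$ equals this root. *)

(* Defs.v *)
From Stdlib Require Import Reals Arith List.
Import ListNotations.
Open Scope R_scope.

(* All 0/1 strings of length M (true = 1), each one has probability 1/2^M. *)
Fixpoint bitstrings (M : nat) : list (list bool) :=
  match M with
  | O => [nil]
  | S m => map (cons true) (bitstrings m) ++ map (cons false) (bitstrings m)
  end.

Definition ones (l : list bool) : nat := length (filter (fun b => b) l).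

(* event: exists N with 0 < N <= length l and  sum_{k<N} X_k < N/d,
   i.e. d * sum_{k<N} X_k < N  (d >= 1). *)
Definition event_upto (d : nat) (l : list bool) : bool :=
  existsb (fun N => Nat.ltb (d * ones (firstn N l)) N) (seq 1 (length l)).

Definition Pfin (d M : nat) : R :=
  INR (length (filter (event_upto d) (bitstrings M))) / 2 ^ M.

(* P_d = lim_{M -> oo} Pfin d M  (continuity of the measure along the
   increasing union of events); "P_d = p" is stated as Un_cv (Pfin d) p. *)

Definition Cx := (R * R)%type.
Definition Cadd (z w : Cx) : Cx := (fst z + fst w, snd z + snd w).
Definition Cmul (z w : Cx) : Cx :=
  (fst z * fst w - snd z * snd w, fst z * snd w + snd z * fst w).
Fixpoint Cpow (z : Cx) (n : nat) : Cx :=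
  match n with O => (1, 0) | S m => Cmul z (Cpow z m) end.
Definition Cnorm2 (z : Cx) : R := fst z ^ 2 + snd z ^ 2.

Definition g (d : nat) (z : Cx) : Cx :=
  Cadd (Cadd (Cpow z d) (-2 * fst z, -2 * snd z)) (1, 0).

(* Main.v *)
Require Import Defs.
From Stdlib Require Import Reals Arith List ZArith Lia Lra.
From Coquelicot Require Complex.
Open Scope R_scope.

Definition step (d : nat) (b : bool) : Z := if b then (1 - Z.of_nat d)%Z else 1%Z.
Fixpoint ev (d : nat) (k : Z) (l : list bool) : bool :=
  Z.leb k 0 || match l with nil => false | b :: l' => ev d (k - step d b)%Z l' end.
Definition pos (d : nat) (l : list bool) (N : nat) : Z :=
  (Z.of_nat N - Z.of_nat d * Z.of_nat (ones (firstn N l)))%Z.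

Lemma pos_cons d b l N : pos d (b :: l) (S N) = (step d b + pos d l N)%Z.
Proof.
  unfold pos, ones, step. change (firstn (S N) (b :: l)) with (b :: firstn N l).
  destruct b; cbn [filter length]; rewrite ?Nat2Z.inj_succ, ?Nat2Z.inj_succ; lia.
Qed.
Lemma pos_0 d l : pos d l 0 = 0%Z.
Proof. unfold pos. simpl. lia. Qed.

Lemma ev_spec d k l : ev d k l = true <-> exists N, (N <= length l)%nat /\ (k <= pos d l N)%Z.
Proof.
  revert k; induction l as [|b l IH]; intro k; simpl.
  - rewrite Bool.orb_false_r, Z.leb_le. split.
    + intro. exists 0%nat. rewrite pos_0. split; [lia| lia].
    + intros [N [HN Hk]]. assert (N = 0%nat) by lia. subst. rewrite pos_0 in Hk. lia.
  - rewrite Bool.orb_true_iff, Z.leb_le, IH. split.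
    + intros [Hk | [N [HN Hk]]].
      * exists 0%nat. rewrite pos_0. split; lia.
      * exists (S N). rewrite pos_cons. split; lia.
    + intros [N [HN Hk]]. destruct N as [|N].
      * left. rewrite pos_0 in Hk. lia.
      * right. exists N. rewrite pos_cons in Hk. split; lia.
Qed.

Lemma event_ev d l : event_upto d l = ev d 1 l.
Proof.
  apply Bool.eq_iff_eq_true. rewrite ev_spec. unfold event_upto.
  rewrite existsb_exists. split.
  - intros [N [HN Hlt]]. apply in_seq in HN. apply Nat.ltb_lt in Hlt.
    exists N. unfold pos. split; lia.
  - intros [N [HN Hk]]. unfold pos in Hk. exists N. split.
    + apply in_seq. lia.
    + apply Nat.ltb_lt. lia.
Qed.

Definition cnt d M k := length (filter (ev d k) (bitstrings M)).
Definition H d M k := INR (cnt d M k) / 2 ^ M.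

Lemma len_bits M : length (bitstrings M) = (2 ^ M)%nat.
Proof. induction M; simpl; auto. rewrite length_app, !length_map, IHM. lia. Qed.

Lemma filter_map_len (f : list bool -> bool) (h : list bool -> list bool) (l : list (list bool)) :
  length (filter f (map h l)) = length (filter (fun x => f (h x)) l).
Proof. induction l; simpl; auto. destruct (f (h a)); simpl; auto. Qed.

Lemma filter_all {A} (f : A -> bool) l : (forall x, In x l -> f x = true) -> filter f l = l.
Proof. induction l; simpl; intros; auto. rewrite H0 by auto. f_equal. auto. Qed.

Lemma cnt_le0 d M k : (k <= 0)%Z -> cnt d M k = (2 ^ M)%nat.
Proof.
  intro Hk. unfold cnt. rewrite <- len_bits. rewrite filter_all; auto.
  intros x _. destruct M; destruct x; simpl; apply Bool.orb_true_iff; left; apply Z.leb_le; lia.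
Qed.

Lemma ev_cons d k b l : ev d k (b :: l) = orb (Z.leb k 0) (ev d (k - step d b)%Z l).
Proof. reflexivity. Qed.

Lemma cnt_rec d M k : (1 <= k)%Z ->
  cnt d (S M) k = (cnt d M (k - 1 + Z.of_nat d) + cnt d M (k - 1))%nat.
Proof.
  intro Hk. unfold cnt. simpl. rewrite filter_app, length_app, !filter_map_len.
  f_equal; apply f_equal; apply filter_ext; intro x; rewrite ev_cons;
  replace (k <=? 0)%Z with false by (symmetry; apply Z.leb_gt; lia); rewrite Bool.orb_false_l; unfold step;
  f_equal; lia.
Qed.

Lemma cnt_le d M k : (cnt d M k <= 2 ^ M)%nat.
Proof. unfold cnt. rewrite <- len_bits. apply filter_length_le. Qed.

Lemma H_le0 d M k : (k <= 0)%Z -> H d M k = 1.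
Proof. intro. unfold H. rewrite cnt_le0 by auto. rewrite pow_INR. replace (INR 2) with 2 by (simpl; lra). field. apply pow_nonzero. lra. Qed.

Lemma H_0 d k : (1 <= k)%Z -> H d 0 k = 0.
Proof.
  intro. unfold H, cnt. simpl. replace (k <=? 0)%Z with false by (symmetry; apply Z.leb_gt; lia).
  simpl. lra.
Qed.

Lemma H_rec d M k : (1 <= k)%Z -> H d (S M) k = (H d M (k - 1) + H d M (k - 1 + Z.of_nat d)) / 2.
Proof.
  intro. unfold H. rewrite cnt_rec by auto. rewrite plus_INR. simpl. field. apply pow_nonzero. lra.
Qed.

Lemma H_bnd d M k : 0 <= H d M k <= 1.
Proof.
  unfold H. pose proof (pow_lt 2 M ltac:(lra)).
  assert (Hc : 0 <= INR (cnt d M k) <= 2 ^ M).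
  { split. apply pos_INR. replace 2 with (INR 2) by (simpl; lra). rewrite <- pow_INR. apply le_INR. apply cnt_le. }
  split.
  - apply Rmult_le_pos. lra. left. apply Rinv_0_lt_compat. lra.
  - apply Rmult_le_reg_r with (2 ^ M); auto. unfold Rdiv. rewrite Rmult_assoc, Rinv_l by lra. lra.
Qed.

Lemma Pfin_H d M : Pfin d M = H d M 1.
Proof.
  unfold Pfin, H, cnt. f_equal. f_equal. f_equal. apply filter_ext. apply event_ev.
Qed.

Lemma H_mono_k d M k : H d M (k + 1) <= H d M k.
Proof.
  revert k; induction M as [|M IH]; intro k.
  - destruct (Z_le_gt_dec k 0).
    + rewrite (H_le0 d 0 k) by auto. apply H_bnd.
    + rewrite H_0 by lia. apply H_bnd.
  - destruct (Z_le_gt_dec k 0).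
    + rewrite (H_le0 d (S M) k) by auto. apply H_bnd.
    + rewrite !H_rec by lia.
      replace (k + 1 - 1)%Z with ((k - 1) + 1)%Z by ring.
      replace (k - 1 + 1 + Z.of_nat d)%Z with ((k - 1 + Z.of_nat d) + 1)%Z by ring.
      pose proof (IH (k-1)%Z). pose proof (IH (k - 1 + Z.of_nat d)%Z). lra.
Qed.

Lemma H_mono_k' d M k k' : (k <= k')%Z -> H d M k' <= H d M k.
Proof.
  intro Hk. replace k' with (k + Z.of_nat (Z.to_nat (k' - k)))%Z by lia.
  generalize (Z.to_nat (k' - k)). induction n.
  - simpl. rewrite Z.add_0_r. lra.
  - rewrite Nat2Z.inj_succ. replace (k + Z.succ (Z.of_nat n))%Z with ((k + Z.of_nat n) + 1)%Z by lia.
    pose proof (H_mono_k d M (k + Z.of_nat n)). lra.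
Qed.

Lemma H_mono_M d M k : H d M k <= H d (S M) k.
Proof.
  revert k; induction M as [|M IH]; intro k.
  - destruct (Z_le_gt_dec k 0).
    + rewrite !H_le0 by auto. lra.
    + rewrite H_0 by lia. apply H_bnd.
  - destruct (Z_le_gt_dec k 0).
    + rewrite !H_le0 by auto. lra.
    + rewrite (H_rec d (S M)) by lia. rewrite (H_rec d M) by lia.
      pose proof (IH (k-1)%Z). pose proof (IH (k - 1 + Z.of_nat d)%Z). lra.
Qed.

Lemma H_mono_M' d M M' k : (M <= M')%nat -> H d M k <= H d M' k.
Proof.
  induction 1. lra. pose proof (H_mono_M d m k). lra.
Qed.

Lemma submult d M1 a M2 b : H d M1 a * H d M2 b <= H d (M1 + M2) (a + b).
Proof.
  revert a; induction M1 as [|m IH]; intro a.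
  - destruct (Z_le_gt_dec a 0).
    + rewrite H_le0 by auto. rewrite Rmult_1_l. simpl.
      apply H_mono_k'. lia.
    + rewrite H_0 by lia. rewrite Rmult_0_l. apply H_bnd.
  - destruct (Z_le_gt_dec a 0).
    + rewrite H_le0 by auto. rewrite Rmult_1_l.
      apply Rle_trans with (H d M2 (a + b)). apply H_mono_k'. lia.
      apply H_mono_M'. lia.
    + destruct (Z_le_gt_dec (a + b) 0).
      * rewrite (H_le0 d _ (a + b)) by auto.
        pose proof (H_bnd d (S m) a). pose proof (H_bnd d M2 b).
        rewrite <- (Rmult_1_l 1). apply Rmult_le_compat; lra.
      * rewrite H_rec by lia. simpl (S m + M2)%nat. rewrite H_rec by lia.
        pose proof (IH (a - 1)%Z). pose proof (IH (a - 1 + Z.of_nat d)%Z).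
        replace (a - 1 + b)%Z with (a + b - 1)%Z in * by ring.
        replace (a - 1 + Z.of_nat d + b)%Z with (a + b - 1 + Z.of_nat d)%Z in * by ring.
        match goal with |- (?x + ?y) / 2 * ?w <= _ => replace ((x + y) / 2 * w) with ((x * w + y * w) / 2) by field end.
        lra.
Qed.

Lemma H_power d M n : H d M 1 ^ n <= H d (n * M) (Z.of_nat n).
Proof.
  induction n.
  - simpl. rewrite H_le0 by lia. lra.
  - simpl pow. simpl (S n * M)%nat. rewrite Nat2Z.inj_succ.
    replace (Z.succ (Z.of_nat n)) with (1 + Z.of_nat n)%Z by lia.
    apply Rle_trans with (H d M 1 * H d (n * M) (Z.of_nat n)).
    + apply Rmult_le_compat_l. apply H_bnd. auto.
    + apply submult.
Qed.

Lemma H_key d M : (1 + H d M 1 ^ d) / 2 <= H d (S (d * M)) 1.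
Proof.
  rewrite H_rec by lia. replace (1 - 1)%Z with 0%Z by ring.
  rewrite (H_le0 d _ 0) by lia. simpl (0 + Z.of_nat d)%Z.
  pose proof (H_power d M d). lra.
Qed.

Lemma H_upper d r : 0 <= r <= 1 -> r ^ d <= 2 * r - 1 ->
  forall M n, H d M (Z.of_nat n) <= r ^ n.
Proof.
  intros Hr Hrd M. induction M as [|M IH]; intro n.
  - destruct n.
    + rewrite H_le0 by lia. simpl; lra.
    + rewrite H_0 by lia. apply pow_le. lra.
  - destruct n as [|m].
    + rewrite H_le0 by lia. simpl; lra.
    + rewrite H_rec by lia.
      replace (Z.of_nat (S m) - 1)%Z with (Z.of_nat m) by lia.
      replace (Z.of_nat m + Z.of_nat d)%Z with (Z.of_nat (m + d)) by lia.
      pose proof (IH m). pose proof (IH (m + d)%nat). rewrite pow_add in *.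
      pose proof (pow_le r m ltac:(lra)). simpl pow. nra.
Qed.

Lemma cv_le u l c : Un_cv u l -> (forall n, u n <= c) -> l <= c.
Proof.
  intros Hu Hc. destruct (Rle_dec l c) as [|Hn]; auto. exfalso.
  destruct (Hu (l - c)) as [N HN]. lra.
  specialize (HN N (Nat.le_refl N)). specialize (Hc N). unfold R_dist in HN.
  apply Rabs_def2 in HN. lra.
Qed.

Lemma cv_pow u l k : Un_cv u l -> Un_cv (fun n => u n ^ k) (l ^ k).
Proof.
  intro Hu. induction k.
  - intros e He. exists 0%nat. intros. unfold R_dist. simpl. rewrite Rminus_diag, Rabs_R0. auto.
  - simpl. apply CV_mult; auto.
Qed.

Lemma limit_exists d : (1 <= d)%nat -> exists L, Un_cv (Pfin d) L /\ 0 <= L <= 1 /\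
  L ^ d <= 2 * L - 1 /\ (forall r, 0 <= r <= 1 -> r ^ d <= 2 * r - 1 -> L <= r).
Proof.
  intro hd.
  assert (Hg : Un_growing (Pfin d)). { intro n. rewrite !Pfin_H. apply H_mono_M. }
  assert (Hb : has_ub (Pfin d)).
  { exists 1. intros x [i ->]. rewrite Pfin_H. apply H_bnd. }
  destruct (growing_cv _ Hg Hb) as [L HL]. exists L. split; auto.
  pose proof (growing_ineq _ _ Hg HL) as Hle.
  split; [split|split].
  - pose proof (Hle 0%nat) as Hq. rewrite Pfin_H in Hq. pose proof (H_bnd d 0 1). lra.
  - apply (cv_le _ _ _ HL). intro n. rewrite Pfin_H. apply H_bnd.
  - assert (forall M, Pfin d M ^ d <= 2 * L - 1).
    { intro M. pose proof (H_key d M). pose proof (Hle (S (d * M))). rewrite !Pfin_H in *. lra. }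
    apply (cv_le _ _ _ (cv_pow _ _ d HL)). auto.
  - intros r Hr Hrd. apply (cv_le _ _ _ HL). intro n. rewrite Pfin_H.
    pose proof (H_upper d r Hr Hrd n 1) as Hq. simpl in Hq. lra.
Qed.

Notation Cm := Complex.Cmod.

Fixpoint Ssum (n : nat) (r : R) : R := match n with O => 0 | S m => Ssum m r + r ^ (S m) end.

Lemma Ssum_id n r : (r - 1) * Ssum n r = r ^ (S n) - r.
Proof. induction n; simpl in *. ring. rewrite Rmult_plus_distr_l, IHn. simpl. ring. Qed.

Lemma Ssum_le n r s : 0 <= r <= s -> Ssum n r <= Ssum n s.
Proof. intro Hq. induction n; simpl. lra. pose proof (pow_incr r s (S n) Hq) as Hq2. simpl in Hq2. lra. Qed.

Lemma powS_lt r s n : 0 <= r < s -> r ^ S n < s ^ S n.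
Proof.
  intro. induction n. simpl. lra.
  change (r * r ^ S n < s * s ^ S n). pose proof (pow_le r (S n) ltac:(lra)). nra.
Qed.

Lemma Ssum_lt n r s : 0 <= r < s -> Ssum (S n) r < Ssum (S n) s.
Proof.
  intro. change (Ssum n r + r ^ S n < Ssum n s + s ^ S n). pose proof (Ssum_le n r s ltac:(lra)).
  assert (r ^ S n < s ^ S n). { apply powS_lt. lra. } lra.
Qed.

Lemma Ssum_lower n r : 0 < r < 1 -> INR (S (S n)) * r ^ (S (S n)) < Ssum (S (S n)) r.
Proof.
  intro Hr. induction n.
  - simpl. assert (0 < r * (1 - r)) by (apply Rmult_lt_0_compat; lra). nra.
  - change (Ssum (S (S (S n))) r) with (Ssum (S (S n)) r + r ^ (S (S (S n)))).
    rewrite S_INR. 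
    assert (Hq : r ^ S (S (S n)) = r ^ S (S n) * r) by (simpl; ring).
    assert (0 < r ^ S (S n)) by (apply pow_lt; lra).
    assert (0 < INR (S (S n))) by (apply lt_0_INR; lia).
    assert (0 < INR (S (S n)) * r ^ S (S n) * (1 - r)) by (apply Rmult_lt_0_compat; [apply Rmult_lt_0_compat|]; lra).
    rewrite Hq. nra.
Qed.

Lemma pow_le1 x n : 0 <= x <= 1 -> x ^ n <= 1.
Proof. intro. induction n; simpl. lra. nra. Qed.

Definition Csub (u v : Cx) : Cx := (fst u - fst v, snd u - snd v).

Lemma Cm_pow z n : Cm (Cpow z n) = Cm z ^ n.
Proof. induction n; simpl. apply Complex.Cmod_1. change (Cm (Complex.Cmult z (Cpow z n)) = Cm z * Cm z ^ n).
  rewrite Complex.Cmod_mult, IHn. auto. Qed.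

Lemma Cm_2 u v : Cm (2 * u, 2 * v) = 2 * Cm (u, v).
Proof.
  replace (2 * u, 2 * v) with (Complex.Cmult (2, 0) (u, v)).
  rewrite Complex.Cmod_mult. f_equal. change (Cm (Complex.RtoC 2) = 2). rewrite Complex.Cmod_R. apply Rabs_right. lra.
  unfold Complex.Cmult. simpl. f_equal; ring.
Qed.

Lemma Cpow_real L n : Cpow (L, 0) n = (L ^ n, 0).
Proof. induction n; simpl. auto. rewrite IHn. unfold Cmul. simpl. f_equal; ring. Qed.

Lemma contraction z L : 0 <= L -> Cm z <= L -> forall n,
  Cm (Csub (Cpow z n) (Cpow (L, 0) n)) <= INR n * L ^ (pred n) * Cm (Csub z (L, 0)).
Proof.
  intros HL Hz n. pose proof (Complex.Cmod_ge_0 (Csub z (L, 0))) as Hm. induction n.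
  - simpl. unfold Csub. simpl. replace (1 - 1, 0 - 0) with (Complex.RtoC 0) by (unfold Complex.RtoC; f_equal; ring).
    rewrite Complex.Cmod_0. lra.
  - assert (E : Csub (Cpow z (S n)) (Cpow (L, 0) (S n)) =
      Cadd (Cmul z (Csub (Cpow z n) (Cpow (L, 0) n))) (Cmul (Cpow (L, 0) n) (Csub z (L, 0)))).
    { simpl. destruct (Cpow z n) as [a b]. destruct (Cpow (L,0) n) as [c e]. destruct z as [x y].
      unfold Csub, Cmul, Cadd; simpl. f_equal; ring. }
    rewrite E. eapply Rle_trans. apply Complex.Cmod_triangle.
    change (Cm (Complex.Cmult z (Csub (Cpow z n) (Cpow (L, 0) n))) + Cm (Complex.Cmult (Cpow (L, 0) n) (Csub z (L, 0)))
       <= INR (S n) * L ^ pred (S n) * Cm (Csub z (L, 0))).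
    rewrite !Complex.Cmod_mult, Cm_pow.
    replace (Cm (L, 0)) with L by (change (L = Cm (Complex.RtoC L)); rewrite Complex.Cmod_R; symmetry; apply Rabs_right; lra).
    pose proof (Complex.Cmod_ge_0 (Csub (Cpow z n) (Cpow (L, 0) n))).
    assert (Hp : INR n * L ^ pred n * L = INR n * L ^ n).
    { destruct n. simpl; ring. simpl. ring. }
    rewrite S_INR. simpl pred.
    apply Rle_trans with (L * (INR n * L ^ pred n * Cm (Csub z (L, 0))) + L ^ n * Cm (Csub z (L, 0))).
    + apply Rplus_le_compat_r. apply Rmult_le_compat; auto. apply Complex.Cmod_ge_0.
    + replace (L * (INR n * L ^ pred n * Cm (Csub z (L, 0)))) with (INR n * L ^ n * Cm (Csub z (L, 0))) by (rewrite <- Hp; ring). right; ring.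
Qed.

Lemma key d L (hd : (2 < d)%nat) (HL0 : 0 <= L) (Hroot : L ^ d = 2 * L - 1)
  (SL : Ssum (d - 1) L = 1) (dL : INR d * L ^ (d - 1) < 2) (HL1 : L < 1) :
  forall z, Cnorm2 z < 1 -> g d z = (0, 0) -> z = (L, 0).
Proof.
  intros [x y] Hn Hgz.
  destruct (Cpow (x, y) d) as [a b] eqn:Ew.
  unfold g in Hgz. rewrite Ew in Hgz. unfold Cadd in Hgz. simpl in Hgz.
  injection Hgz as Ha Hb.
  set (r := Cm (x, y)).
  assert (Hr0 : 0 <= r) by apply Complex.Cmod_ge_0.
  assert (Hr2 : r ^ 2 = x ^ 2 + y ^ 2) by (unfold r; rewrite Complex.Cmod2_alt; reflexivity).
  unfold Cnorm2 in Hn; simpl in Hn.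
  assert (Hr1 : r < 1) by nra.
  assert (Hab : Cm (a, b) = r ^ d) by (rewrite <- Ew; apply Cm_pow).
  assert (Htri : 2 * r <= r ^ d + 1).
  { unfold r. rewrite <- Cm_2. replace (2 * x, 2 * y) with (Complex.Cplus (a, b) (1, 0)).
    eapply Rle_trans. apply Complex.Cmod_triangle. rewrite Hab.
    replace (Cm (1, 0)) with 1 by (symmetry; apply Complex.Cmod_1). unfold r; lra.
    unfold Complex.Cplus; simpl; f_equal; lra. }
  assert (HrL : r <= L).
  { destruct (Rle_dec r L) as [|Hc]; auto. exfalso.
    assert (Hs : Ssum (S (d - 2)) L < Ssum (S (d - 2)) r) by (apply Ssum_lt; lra).
    replace (S (d - 2)) with (d - 1)%nat in Hs by lia.
    pose proof (Ssum_id (d - 1) r) as Hi. replace (S (d - 1)) with d in Hi by lia.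
    rewrite SL in Hs. nra. }
  pose proof (contraction (x, y) L HL0 HrL d) as Hc.
  rewrite Ew, Cpow_real in Hc. unfold Csub in Hc. simpl in Hc.
  replace (a - L ^ d, b - 0) with (2 * (x - L), 2 * (y - 0)) in Hc by (f_equal; lra).
  rewrite Cm_2 in Hc. replace (Init.Nat.pred d) with (d - 1)%nat in Hc by lia.
  pose proof (Complex.Cmod_ge_0 (x - L, y - 0)).
  assert (Hm : Cm (x - L, y - 0) = 0) by nra.
  apply Complex.Cmod_eq_0 in Hm. unfold Complex.RtoC in Hm. injection Hm as H1 H2.
  f_equal; lra.
Qed.

Theorem mainTheorem5 (d : nat) (hd : (1 <= d)%nat) :
  ((d <= 2)%nat -> Un_cv (Pfin d) 1) /\
  ((2 < d)%nat ->
     (exists! z : Cx, Cnorm2 z < 1 /\ g d z = (0, 0)) /\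
     (forall z : Cx, Cnorm2 z < 1 -> g d z = (0, 0) ->
        snd z = 0 /\ 1/2 < fst z < 1 /\ Un_cv (Pfin d) (fst z))).
Proof.
  destruct (limit_exists d hd) as [L [HL [[HL0 HL1] [Hg Hmin]]]].
  split.
  - intro hd2. assert (L = 1).
    { destruct d as [|[|[|]]]; try lia; simpl in Hg; nra. }
    subst; auto.
  - intro hd3.
    assert (L34 : L <= 3/4).
    { apply Hmin. lra. replace d with (3 + (d - 3))%nat by lia. rewrite pow_add.
      pose proof (pow_le1 (3/4) (d - 3) ltac:(lra)). pose proof (pow_le (3/4) (d - 3) ltac:(lra)).
      simpl. nra. }
    assert (Lpos : 0 < L).
    { destruct (Rle_dec L 0); [|lra]. assert (L = 0) by lra. subst.
      rewrite pow_i in Hg by lia. lra. }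
    assert (Lhalf : 1/2 < L).
    { pose proof (pow_lt L d Lpos). lra. }
    assert (Hroot : L ^ d = 2 * L - 1).
    { destruct (Rle_dec (2 * L - 1) (L ^ d)); [lra|]. exfalso.
      set (e := (2 * L - 1 - L ^ d) / 4).
      assert (0 < e) by (unfold e; lra).
      assert (e <= 1/4). { unfold e. pose proof (pow_le L d ltac:(lra)). lra. }
      assert (Hr : L <= L - e).
      { apply Hmin. lra. pose proof (pow_incr (L - e) L d ltac:(lra)). unfold e in *. lra. }
      lra. }
    assert (SL : Ssum (d - 1) L = 1).
    { pose proof (Ssum_id (d - 1) L) as Hi. replace (S (d - 1)) with d in Hi by lia.
      rewrite Hroot in Hi. apply Rmult_eq_reg_l with (L - 1). lra. lra. }
    assert (dL : INR d * L ^ (d - 1) < 2).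
    { destruct d as [|[|[|k]]]; try lia.
      pose proof (Ssum_lower k L ltac:(lra)) as Hq.
      replace (S (S (S k)) - 1)%nat with (S (S k)) in * by lia. rewrite SL in Hq.
      pose proof (powS_lt L 1 (S k) ltac:(lra)) as Hq2. rewrite pow1 in Hq2.
      rewrite S_INR. lra. }
    pose proof (key d L hd3 HL0 Hroot SL dL ltac:(lra)) as K.
    split.
    + exists (L, 0). split.
      * split. unfold Cnorm2; simpl; nra.
        unfold g. rewrite Cpow_real. unfold Cadd. simpl. f_equal; lra.
      * intros z' [H1 H2]. symmetry. apply K; auto.
    + intros z H1 H2. rewrite (K z H1 H2). simpl. split; [auto | split; [lra | auto]].
Qed.
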